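(* Fix $p\in(0,1/2]$, an integer $k\ge 1$, and $\epsilon>0$. There exist $c=c(p,k,\epsilon)>0$ and $n_0=n_0(p,k,\epsilon)$ such that the following holds. Let $n\ge n_0$, let $M$ be an $(n-k)\times n$ random matrix with independent $\operatorname{Ber}(p)$ entries, and let $V$ be a (deterministic) $n\times k$ real matrix with orthonormal columns. Then \[\mathbb{P}\big[\|MV\|_{\operatorname{HS}}\le c\sqrt{n}\big]\le (1-p+\epsilon)^{kn}.\]
   Context: $\operatorname{Ber}(p)$ takes value $1$ with probability $p$ and $0$ with probability $1-p$. For a matrix $A=(A_{ij})$, $\|A\|_{\operatorname{HS}}^2=\sum_{i,j}A_{ij}^2$ (Hilbert–Schmidt norm). *)

(* Defs.v *)
From HB Require Import structures.
From mathcomp Require Import all_boot all_order all_algebra.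
From mathcomp Require Import reals.
Set Implicit Arguments. Unset Strict Implicit. Unset Printing Implicit Defensive.
Import Order.TTheory GRing.Theory Num.Theory.
Local Open Scope ring_scope.

Definition ber_weight (R : realType) (p : R) (m n : nat) (M : 'M[bool]_(m, n)) : R :=
  \prod_(i < m) \prod_(j < n) (if M i j then p else 1 - p).

Definition ber_prob (R : realType) (p : R) (m n : nat) (E : pred 'M[bool]_(m, n)) : R :=
  \sum_(M : 'M[bool]_(m, n) | E M) ber_weight p M.

Definition real_of_bmx (R : realType) (m n : nat) (M : 'M[bool]_(m, n)) : 'M[R]_(m, n) :=
  map_mx (fun b : bool => (b : nat)%:R) M.

Definition hs_norm (R : realType) (m n : nat) (A : 'M[R]_(m, n)) : R :=
  Num.sqrt (\sum_(i < m) \sum_(j < n) A i j ^+ 2).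

(* Main.v *)
Require Import Defs.
From HB Require Import structures.
From mathcomp Require Import all_boot all_order all_algebra.
From mathcomp Require Import reals.
From mathcomp Require Import all_classical all_reals all_analysis.
From mathcomp Require Import complex.
From mathcomp Require Import ring lra zify.
Import Order.TTheory GRing.Theory Num.Theory.
Import numFieldNormedType.Exports.
Local Open Scope ring_scope.

Set Implicit Arguments. Unset Strict Implicit. Unset Printing Implicit Defensive.


Section Prob.
Variable R : realType.
Variable p : R.
Hypothesis p0 : 0 < p.
Hypothesis p12 : p <= 2^-1.

Lemma hp : p <= 1 - p.
Proof.
have h2 : (2^-1 : R) = 1/2 by rewrite div1r.
move: p12; rewrite h2 => h; lra.
Qed.

Definition om (b : bool) : R := if b then p else 1 - p.
Lemma om_ge0 b : 0 <= om b.
Proof. have := hp; have := p0; rewrite /om; case: b => /= ? ?; lra. Qed.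

Definition rw n (r : {ffun 'I_n -> bool}) : R := \prod_i om (r i).
Lemma rw_ge0 n r : 0 <= @rw n r.
Proof. by apply: prodr_ge0 => i _; apply: om_ge0. Qed.

Lemma rw_factor n (F : 'I_n -> bool -> R) :
  \sum_(r : {ffun 'I_n -> bool}) rw r * \prod_i F i (r i)
  = \prod_i (\sum_(b : bool) om b * F i b).
Proof.
rewrite bigA_distr_bigA /=; apply: eq_bigr => r _.
by rewrite /rw -big_split.
Qed.

Lemma rw_sum1 n : \sum_(r : {ffun 'I_n -> bool}) rw r = 1.
Proof.
have := @rw_factor n (fun _ _ => 1).
rewrite (eq_bigr (fun r => rw r)); last by move=> r _; rewrite big1 ?mulr1.
move=> ->; apply: big1 => i _.
by rewrite big_bool /= /om !mulr1; lra.
Qed.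

Definition flip n (l : 'I_n) (r : {ffun 'I_n -> bool}) : {ffun 'I_n -> bool} :=
  [ffun i => if i == l then ~~ r i else r i].
Lemma flipK n l : involutive (@flip n l).
Proof.
move=> r; apply/ffunP => i; rewrite !ffunE.
by case: (i == l) => //; rewrite negbK.
Qed.

Lemma peel n (l : 'I_n) (A B : {ffun 'I_n -> bool} -> bool) :
  (forall r, B (flip l r) = B r) ->
  (forall r, ~~ (A r && A (flip l r))) ->
  \sum_r rw r * ((A r && B r)%:R) <= (1 - p) * \sum_r rw r * ((B r)%:R).
Proof.
move=> HB HA.
pose W (r : {ffun 'I_n -> bool}) := \prod_(i | i != l) om (r i).
have rwE r : rw r = om (r l) * W r by rewrite /rw (bigD1 l).
have Wf r : W (flip l r) = W r.
  by apply: eq_bigr => i il; rewrite ffunE (negbTE il).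
have fl r : flip l r l = ~~ r l by rewrite ffunE eqxx.
have split (F : {ffun 'I_n -> bool} -> R) :
    \sum_r F r = \sum_(r : {ffun 'I_n -> bool} | ~~ r l) (F r + F (flip l r)).
  rewrite (bigID (fun r : {ffun 'I_n -> bool} => r l)) /= addrC big_split /=; congr (_ + _).
  rewrite (reindex_inj (inv_inj (@flipK n l))) /=.
  by apply: eq_bigl => r; rewrite fl.
rewrite (split (fun r => rw r * (B r)%:R)) (split (fun r => rw r * (A r && B r)%:R)).
rewrite mulr_sumr; apply: ler_sum => r /negbTE rl.
rewrite !rwE !Wf fl !HB rl /om /=.
have W0 : 0 <= W r by apply: prodr_ge0 => i _; apply: om_ge0.
have := HA r.
have := hp.
have := p0; case: (A r); case: (A (flip l r)); case: (B r) => //= hp0 hp1 _; rewrite ?mulr0 ?mulr1 ?addr0 ?add0r; nra.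
Qed.

End Prob.


Section Trig.
Variable R : realType.

Lemma cos_ge_cos1 (x : R) : x ^+ 2 <= 1 -> cos 1 <= cos x.
Proof.
move=> hx; rewrite -(cos_norm x).
have ax : `|x| <= 1.
  by rewrite -(ler_pXn2r (_ : (0 < 2)%N)) ?nnegrE ?normr_ge0 // expr1n real_normK ?num_real.
have pi1 : (1 : R) <= pi by have := @pi_ge2 R; lra.
have [e|lt] := eqVneq `|x| 1; first by rewrite e.
have lt1 : `|x| < 1 by rewrite lt_neqAle lt ax.
apply: ltW; rewrite ltr_cos // in_itv /= ?normr_ge0 ?(le_trans ax) //.
by apply/andP; split => //; lra.
Qed.

Lemma cos1_gt0' : (0 : R) < cos 1. Proof. exact: cos1_gt0. Qed.

Lemma sin_lb (y : R) : 0 <= y <= 1 -> y * cos 1 <= sin y.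
Proof.
move=> /andP[y0 y1].
have [c /itvP cI h] := @MVT_segment R sin cos 0 y y0
  (fun x _ => is_derive_sin x) (continuous_subspaceT (@continuous_sin R)).
move: h; rewrite sin0 subr0 subr0 => ->.
rewrite [cos c * _]mulrC; apply: ler_wpM2l => //; apply: cos_ge_cos1.
have c0 : 0 <= c by rewrite cI.
have cy : c <= y by rewrite cI.
nra.
Qed.

Lemma one_sub_cos (x : R) : x ^+ 2 <= 1 -> cos 1 ^+ 2 / 2 * x ^+ 2 <= 1 - cos x.
Proof.
wlog x0 : x / 0 <= x.
  move=> H hx; have [/H|xn] := leP 0 x; first exact.
  by have := H (- x); rewrite cosN sqrrN; apply => //; lra.
move=> hx.
have x1 : x <= 1 by nra.
have e : x = (x / 2) *+ 2 by rewrite -mulr_natr mulfVK // pnatr_eq0.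
have e2 : cos x = 1 - 2 * sin (x / 2) ^+ 2.
  by rewrite {1}e cos_mulr2n (cos2sin2 (x / 2)); ring.
rewrite e2.
have := @sin_lb (x / 2); rewrite ?(divr_ge0 x0) //= => /(_ _).
move=> H; have {}H : x / 2 * cos 1 <= sin (x / 2) by apply: H; lra.
have C0 := @cos1_gt0 R.
have h0 : 0 <= x / 2 * cos 1 by apply: mulr_ge0 => //; [lra | apply: ltW].
have : (x / 2 * cos 1) ^+ 2 <= sin (x / 2) ^+ 2 by rewrite ler_sqr // nnegrE; apply: le_trans H.
move: h0 H; set S := sin (x / 2); set C := cos 1 => h0 H h.
have -> : 1 - (1 - 2 * S ^+ 2) = 2 * S ^+ 2 by ring.
have -> : C ^+ 2 / 2 * x ^+ 2 = 2 * (x / 2 * C) ^+ 2 by field.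
lra.
Qed.

End Trig.

Section Fourier.
Local Open Scope complex_scope.
Variable R : realType.
Variable p : R.
Hypothesis p0 : 0 < p.
Hypothesis p12 : p <= 2^-1.

Definition ex (t : R) : R[i] := (cos t +i* sin t)%C.
Lemma exD a b : ex (a + b) = ex a * ex b.
Proof. rewrite /ex cosD sinD; apply/eqP; rewrite eq_complex /=. apply/andP; split; apply/eqP; ring. Qed.
Lemma ex0 : ex 0 = 1.
Proof. by rewrite /ex cos0 sin0. Qed.

Definition N2 (z : R[i]) := complex.Re z ^+ 2 + complex.Im z ^+ 2.
Lemma N2M : {morph N2 : x y / x * y}.
Proof. case=> a b [c d]; rewrite /N2; simpc; rewrite /=; ring. Qed.
Lemma N2_1 : N2 1 = 1.
Proof. by rewrite /N2 /= expr0n expr1n addr0. Qed.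

Lemma ReD : {morph (@complex.Re R) : x y / x + y}.
Proof. by case=> a b [c d]. Qed.

Definition xr (b : bool) : R := (b : nat)%:R.
Definition Yv n (v : 'I_n -> R) (r : {ffun 'I_n -> bool}) := \sum_i xr (r i) * v i.

Definition phi n (v : 'I_n -> R) t :=
  \sum_(r : {ffun 'I_n -> bool}) (rw p r)%:C * ex (t * Yv v r).

Lemma phi_prod n (v : 'I_n -> R) t :
  phi v t = \prod_i ((1 - p)%:C + p%:C * ex (t * v i)).
Proof.
rewrite /phi.
transitivity (\sum_(r : {ffun 'I_n -> bool})
   \prod_i ((om p (r i))%:C * ex (t * (xr (r i) * v i)))).
  apply: eq_bigr => r _.
  rewrite /Yv mulr_sumr (big_morph ex exD ex0) /rw rmorph_prod -big_split.
  done.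
transitivity (\prod_i \sum_(b : bool) ((om p b)%:C * ex (t * (xr b * v i)))).
  by rewrite bigA_distr_bigA.
apply: eq_bigr => i _.
by rewrite big_bool /= /xr /om /= mul0r mulr0 ex0 mulr1 mul1r addrC.
Qed.

Lemma N2_factor x :
  N2 ((1 - p)%:C + p%:C * ex x) = 1 - 2 * p * (1 - p) * (1 - cos x).
Proof.
rewrite /N2 /ex; simpc; rewrite /=.
rewrite exprMn sin2cos2; ring.
Qed.

End Fourier.


Section LO.
Local Open Scope complex_scope.
Variable R : realType.
Variable p : R.
Hypothesis p0 : 0 < p.
Hypothesis p12 : p <= 2^-1.

Lemma Re_phi n (v : 'I_n -> R) t :
  complex.Re (phi p v t) = \sum_r rw p r * cos (t * Yv v r).
Proof.
rewrite /phi (big_morph _ (@ReD R) (erefl : complex.Re (0 : R[i]) = 0)).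
by apply: eq_bigr => r _; rewrite /ex; simpc.
Qed.

Lemma N2_phi n (v : 'I_n -> R) t :
  N2 (phi p v t) = \prod_i (1 - 2 * p * (1 - p) * (1 - cos (t * v i))).
Proof.
rewrite phi_prod (big_morph _ (@N2M R) (@N2_1 R)).
by apply: eq_bigr => i _; rewrite N2_factor.
Qed.

Lemma Re_sq_le (z : R[i]) : complex.Re z ^+ 2 <= N2 z.
Proof. by rewrite /N2 lerDl sqr_ge0. Qed.

Lemma prod_le n (a : 'I_n -> R) : (forall i, 0 <= a i <= 1) ->
  (\prod_i (1 - a i)) * (1 + \sum_i a i) <= 1.
Proof.
elim: n a => [|n IH] a ha; first by rewrite !big_ord0 addr0 mulr1.
rewrite big_ord_recr big_ord_recr /=.
set P := \prod_(i < n) _; set S := \sum_(i < n) _.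
have hP : P * (1 + S) <= 1 by apply: IH => i; apply: ha.
have P0 : 0 <= P by apply: prodr_ge0 => i _; have := ha (widen_ord (leqnSn n) i); lra.
have S0 : 0 <= S by apply: sumr_ge0 => i _; have := ha (widen_ord (leqnSn n) i); lra.
have := ha ord_max; set x := a ord_max => /andP[x0 x1].
have h1 : 0 <= P * (x * S + x ^+ 2) by apply: mulr_ge0 => //; apply: addr_ge0; [apply: mulr_ge0|apply: sqr_ge0].
have -> : P * (1 - x) * (1 + (S + x)) = P * (1 + S) - P * (x * S + x ^+ 2) by ring.
lra.
Qed.


Lemma hp4 : 0 <= 2 * p * (1 - p) <= 2^-1.
Proof.
have h2 : (2^-1 : R) = 1/2 by rewrite div1r.
move: p12; rewrite h2 => h; have := sqr_ge0 (2 * p - 1); have := p0 => hp0 hsq.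
apply/andP; split; nra.
Qed.

Lemma Re_phi_bound n (v : 'I_n -> R) (M t : R) :
  \sum_i v i ^+ 2 = 1 -> (forall i, (M * v i) ^+ 2 <= 1) -> t ^+ 2 <= M ^+ 2 ->
  complex.Re (phi p v t) ^+ 2 * (1 + 2 * p * (1 - p) * (cos 1 ^+ 2 / 2) * t ^+ 2) <= 1.
Proof.
move=> hv hMv htM.
have /andP[q0 q1] := hp4.
have h2 : (2^-1 : R) = 1/2 by rewrite div1r.
rewrite h2 in q1.
set q := 2 * p * (1 - p) in q0 q1 *.
pose a i := q * (1 - cos (t * v i)).
have ha i : 0 <= a i <= 1.
  have := cos_geN1 (t * v i); have := cos_le1 (t * v i); rewrite /a => c1 c2.
  apply/andP; split; nra.
have tv i : (t * v i) ^+ 2 <= 1.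
  apply: le_trans (hMv i); rewrite !exprMn; apply: ler_wpM2r => //; exact: sqr_ge0.
have hs : q * (cos 1 ^+ 2 / 2) * t ^+ 2 <= \sum_i a i.
  have -> : q * (cos 1 ^+ 2 / 2) * t ^+ 2 = \sum_i q * (cos 1 ^+ 2 / 2 * (t * v i) ^+ 2).
    rewrite -[LHS]mulr1 -hv mulr_sumr; apply: eq_bigr => i _; rewrite exprMn; ring.
  by apply: ler_sum => i _; rewrite /a; apply: ler_wpM2l => //; apply: one_sub_cos.
have hN := Re_sq_le (phi p v t).
rewrite N2_phi in hN.
have hP := prod_le ha.
have P0 : 0 <= \prod_i (1 - a i) by apply: prodr_ge0 => i _; have := ha i; lra.
have t0 : 0 <= q * (cos 1 ^+ 2 / 2) * t ^+ 2.
  by apply: mulr_ge0; [apply: mulr_ge0 => //; apply: divr_ge0 => //; apply: sqr_ge0|apply: sqr_ge0].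
apply: le_trans hP.
apply: le_trans (_ : (\prod_i (1 - a i)) * (1 + q * (cos 1 ^+ 2 / 2) * t ^+ 2) <= _).
  by apply: ler_wpM2r; [lra | exact: hN].
by apply: ler_wpM2l => //; lra.
Qed.


Lemma F_id N (s y : R) :
  \sum_(m < N) \sum_(m' < N) cos ((m%:R - m'%:R) * s * y)
   = (\sum_(m < N) cos (m%:R * s * y)) ^+ 2 + (\sum_(m < N) sin (m%:R * s * y)) ^+ 2.
Proof.
rewrite !expr2 !mulr_suml -big_split; apply: eq_bigr => m _.
rewrite !mulr_sumr -big_split; apply: eq_bigr => m' _.
by rewrite mulrBl mulrBl cosB.
Qed.

Lemma sum_F n (v : 'I_n -> R) N s :
  \sum_r rw p r * ((\sum_(m < N) cos (m%:R * s * Yv v r)) ^+ 2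
                    + (\sum_(m < N) sin (m%:R * s * Yv v r)) ^+ 2)
  = \sum_(m < N) \sum_(m' < N) complex.Re (phi p v ((m%:R - m'%:R) * s)).
Proof.
under eq_bigr do rewrite -F_id mulr_sumr.
rewrite exchange_big; apply: eq_bigr => m _.
under eq_bigr do rewrite mulr_sumr.
rewrite exchange_big; apply: eq_bigr => m' _.
by rewrite Re_phi.
Qed.


Lemma LO (th : R) : 0 < th -> exists d : R, 0 < d /\ forall n (v : 'I_n -> R),
  \sum_i v i ^+ 2 = 1 -> (forall i, v i ^+ 2 <= 4 * d ^+ 2) ->
  \sum_r rw p r * (((Yv v r ^+ 2 <= d ^+ 2)%R : bool)%:R) <= th.
Proof.
move=> th0.
have C0 := @cos1_gt0 R; set C := cos 1 in C0 *.
have /andP[q0 q1] := hp4.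
have pq : 0 < 2 * p * (1 - p).
  have h2 : (2^-1 : R) = 1/2 by rewrite div1r.
  move: p12; rewrite h2 => h.
  by apply: mulr_gt0; [apply: mulr_gt0 => //|lra].
set k := 2 * p * (1 - p) * (C ^+ 2 / 2).
have k0 : 0 < k by rewrite /k; apply: mulr_gt0 => //; apply: divr_gt0 => //; apply: exprn_gt0.
set tau := th * C ^+ 2 / 2.
have tau0 : 0 < tau by rewrite /tau; apply: divr_gt0 => //; apply: mulr_gt0 => //; apply: exprn_gt0.
pose N := (Num.Def.archi_bound (2 / (th * C ^+ 2))).+1.
have hN : 2 / (th * C ^+ 2) < N%:R.
  apply: lt_le_trans (archi_boundP _) _; first by apply: divr_ge0 => //; apply: mulr_ge0; [lra|apply: sqr_ge0].
  by rewrite ler_nat.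
have N0 : (0 : R) < N%:R by rewrite ltr0n.
clearbody N.
set s := 1 + 1 / (k * tau ^+ 2).
have s1 : 1 <= s.
  by rewrite /s lerDl; apply: divr_ge0 => //; apply: mulr_ge0; [lra|apply: sqr_ge0].
set M := N%:R * s.
have M0 : 0 < M by rewrite /M; apply: mulr_gt0 => //; lra.
exists (1 / (2 * M)); split; first by apply: divr_gt0 => //; lra.
move=> n v hv hvi.
have hMv i : (M * v i) ^+ 2 <= 1.
  have e : M ^+ 2 * (4 * (1 / (2 * M)) ^+ 2) = 1 by field; lra.
  rewrite exprMn -e; apply: ler_wpM2l => //; exact: sqr_ge0.
have ks : 1 <= k * s ^+ 2 * tau ^+ 2.
  have e : k * s * tau ^+ 2 = k * tau ^+ 2 + 1.
    by rewrite /s; field; apply/andP; split; apply: lt0r_neq0 => //; apply: exprn_gt0.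
  have : k * s * tau ^+ 2 <= k * s ^+ 2 * tau ^+ 2.
    apply: ler_wpM2r; first exact: sqr_ge0.
    by apply: ler_wpM2l; [lra|]; rewrite expr2 ler_peMl //; lra.
  have : 0 <= k * tau ^+ 2 by apply: mulr_ge0; [lra|apply: sqr_ge0].
  lra.
have Rb (m m' : 'I_N) :
    complex.Re (phi p v ((m%:R - m'%:R) * s)) <= (m == m')%:R + tau.
  have [->|neq] := eqVneq m m'.
    rewrite subrr mul0r Re_phi.
    under eq_bigr do rewrite mul0r cos0 mulr1.
    by rewrite rw_sum1 //=; lra.
  rewrite /= add0r.
  set X := complex.Re _.
  set d := (m%:R - m'%:R : R).
  have mN : (m%:R : R) < N%:R by rewrite ltr_nat.
  have mN' : (m'%:R : R) < N%:R by rewrite ltr_nat.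
  have m0 : (0 : R) <= m%:R by [].
  have m0' : (0 : R) <= m'%:R by [].
  have [d1 dN] : 1 <= d ^+ 2 /\ d ^+ 2 <= N%:R ^+ 2.
    case: (ltngtP m m') => [lt|lt|eq]; last by move: neq; rewrite -val_eqE /= eq eqxx.
      have h : (m%:R : R) + 1 <= m'%:R by rewrite natr1 ler_nat.
      by rewrite /d; split; nra.
    have h : (m'%:R : R) + 1 <= m%:R by rewrite natr1 ler_nat.
    by rewrite /d; split; nra.
  have e : m%:R - m'%:R = d by [].
  have htM : ((m%:R - m'%:R) * s) ^+ 2 <= M ^+ 2.
    rewrite e /M !exprMn; apply: ler_wpM2r => //; exact: sqr_ge0.
  have hb := Re_phi_bound hv hMv htM.
  rewrite -/X -/C -/k in hb.
  have hts : s ^+ 2 <= ((m%:R - m'%:R) * s) ^+ 2.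
    by rewrite e exprMn ler_peMl //; apply: sqr_ge0.
  have X0 : 0 <= X ^+ 2 by apply: sqr_ge0.
  have h1 : X ^+ 2 * (1 + k * s ^+ 2) <= 1.
    apply: le_trans hb; apply: ler_wpM2l => //; rewrite lerD2l.
    by apply: ler_wpM2l => //; lra.
  have h2 : X ^+ 2 <= tau ^+ 2.
    have : X ^+ 2 * (k * s ^+ 2 * tau ^+ 2) <= tau ^+ 2.
      have t2 : 0 <= tau ^+ 2 by apply: sqr_ge0.
      have : X ^+ 2 * (k * s ^+ 2) * tau ^+ 2 <= tau ^+ 2.
        by rewrite -[X in _ <= X]mul1r; apply: ler_wpM2r => //; nra.
      by rewrite !mulrA.
    by move=> h; nra.
  nra.
set dd := 1 / (2 * M).
have hMd : M ^+ 2 * dd ^+ 2 = 1 / 4 by rewrite /dd; field; lra.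
pose cs (y : R) := \sum_(m < N) cos (m%:R * s * y).
pose sn (y : R) := \sum_(m < N) sin (m%:R * s * y).
have lowb r : (Yv v r ^+ 2 <= dd ^+ 2) ->
    (N%:R * C) ^+ 2 <= cs (Yv v r) ^+ 2 + sn (Yv v r) ^+ 2.
  move=> hy.
  have hc : N%:R * C <= cs (Yv v r).
    have -> : N%:R * C = \sum_(m < N) C by rewrite sumr_const card_ord mulr_natl.
    apply: ler_sum => m _; apply: cos_ge_cos1.
    have mN : (m%:R : R) <= N%:R by rewrite ler_nat ltnW.
    have m0 : (0 : R) <= m%:R by [].
    have : (m%:R * s) ^+ 2 <= M ^+ 2.
      by rewrite /M !exprMn; apply: ler_wpM2r; [apply: sqr_ge0|nra].
    move=> h1; rewrite !exprMn.
    have y0 : 0 <= Yv v r ^+ 2 by apply: sqr_ge0.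
    have h2 : (m%:R ^+ 2 * s ^+ 2) * Yv v r ^+ 2 <= M ^+ 2 * dd ^+ 2.
      apply: le_trans (_ : M ^+ 2 * Yv v r ^+ 2 <= _).
        by apply: ler_wpM2r => //; rewrite -exprMn.
      by apply: ler_wpM2l => //; apply: sqr_ge0.
    lra.
  have hc0 : 0 <= N%:R * C by apply: mulr_ge0; lra.
  have : (N%:R * C) ^+ 2 <= cs (Yv v r) ^+ 2 by rewrite ler_sqr // nnegrE; lra.
  have := sqr_ge0 (sn (Yv v r)); lra.
have hF r : 0 <= cs (Yv v r) ^+ 2 + sn (Yv v r) ^+ 2 by apply: addr_ge0; apply: sqr_ge0.
set P := (X in X <= th).
have main : P * (N%:R * C) ^+ 2 <=
    \sum_(m < N) \sum_(m' < N) ((m == m')%:R + tau).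
  apply: le_trans (_ : \sum_r rw p r * (cs (Yv v r) ^+ 2 + sn (Yv v r) ^+ 2) <= _).
    rewrite /P mulr_suml; apply: ler_sum => r _.
    rewrite -mulrA; apply: ler_wpM2l; first exact: rw_ge0.
    case hy : (Yv v r ^+ 2 <= dd ^+ 2) => /=; first by rewrite mul1r; apply: lowb.
    by rewrite mul0r.
  rewrite sum_F; apply: ler_sum => m _; apply: ler_sum => m' _; exact: Rb.
have sumeq : \sum_(m < N) \sum_(m' < N) ((m == m')%:R + tau : R)
    = N%:R + N%:R ^+ 2 * tau.
  under eq_bigr do rewrite big_split /= sumr_const card_ord.
  rewrite big_split /= sumr_const card_ord.
  have -> : \sum_(i < N) \sum_(i0 < N) ((i == i0)%:R : R) = \sum_(i < N) 1.
    apply: eq_bigr => i _; rewrite (bigD1 i) //= eqxx big1 ?addr0 //.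
    by move=> j /negbTE; rewrite eq_sym => ->.
  by rewrite sumr_const card_ord; ring.
rewrite sumeq in main.
have P0 : 0 <= P by apply: sumr_ge0 => r _; apply: mulr_ge0; [apply: rw_ge0|apply: ler0n].
set X := N%:R * C ^+ 2.
have X0 : 0 < X by apply: mulr_gt0 => //; apply: exprn_gt0.
have hX : 2 < th * X.
  move: hN; rewrite ltr_pdivrMr; last by apply: mulr_gt0 => //; apply: exprn_gt0.
  by rewrite /X; move=> h; apply: lt_le_trans h _; rewrite le_eqVlt; apply/orP; left; apply/eqP; ring.
have e1 : (N%:R * C) ^+ 2 = N%:R * X by rewrite /X exprMn expr2 mulrA.
have e2 : N%:R + N%:R ^+ 2 * tau = N%:R * (1 + th * X / 2).
  by rewrite /X /tau; ring.
rewrite e1 e2 in main.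
have main' : P * X <= 1 + th * X / 2.
  by move: main; rewrite mulrCA ler_pM2l.
rewrite leNgt; apply/negP => h.
have : th * X < P * X by rewrite ltr_pM2r.
lra.
Qed.

End LO.


Section Mx.
Variable R : realType.

Definition dot k (x y : 'rV[R]_k) : R := (x *m y^T) 0 0.
Lemma dotE k (x y : 'rV[R]_k) : dot x y = \sum_c x 0 c * y 0 c.
Proof. by rewrite /dot mxE; apply: eq_bigr => c _; rewrite mxE. Qed.
Lemma dotC k (x y : 'rV[R]_k) : dot x y = dot y x.
Proof. by rewrite !dotE; apply: eq_bigr => c _; rewrite mulrC. Qed.
Lemma dot_ge0 k (x : 'rV[R]_k) : 0 <= dot x x.
Proof. by rewrite dotE; apply: sumr_ge0 => c _; rewrite -expr2 sqr_ge0. Qed.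
Lemma mul11 (A B : 'M[R]_1) : (A *m B) 0 0 = A 0 0 * B 0 0.
Proof. by rewrite mxE big_ord1. Qed.

Section Q.
Variable k : nat.
Variable u : 'rV[R]_k.
Let S := dot u u.
Hypothesis S0 : S != 0.
Definition Qm : 'M[R]_k := 1%:M - S^-1 *: (u^T *m u).

Lemma uuT : u *m u^T = S%:M.
Proof. by rewrite [LHS]mx11_scalar. Qed.

Lemma Qm_tr : Qm^T = Qm.
Proof. by rewrite /Qm linearB /= linearZ /= trmx1 trmx_mul trmxK. Qed.

Lemma uQ : u *m Qm = 0.
Proof.
rewrite /Qm mulmxBr mulmx1 -scalemxAr mulmxA uuT mul_scalar_mx scalerA mulVf //.
by rewrite scale1r subrr.
Qed.

Lemma Qu : Qm *m u^T = 0.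
Proof. by rewrite -Qm_tr -trmx_mul uQ linear0. Qed.

Lemma QQ : Qm *m Qm = Qm.
Proof. by rewrite {1}/Qm mulmxBl mul1mx -scalemxAl -mulmxA uQ mulmx0 scaler0 subr0. Qed.

Lemma dotQ (y : 'rV[R]_k) : dot (y *m Qm) (y *m Qm) = dot y y - (dot y u) ^+ 2 / S.
Proof.
have e : y *m Qm *m y^T = y *m y^T - S^-1 *: ((y *m u^T) *m (u *m y^T)).
  by rewrite /Qm mulmxBr mulmxBl mulmx1 -scalemxAr -scalemxAl !mulmxA.
have e2 : (u *m y^T) 0 0 = (y *m u^T) 0 0.
  by rewrite -[u *m y^T]trmxK trmx_mul trmxK mxE.
rewrite /dot trmx_mul Qm_tr mulmxA -[y *m Qm *m Qm]mulmxA QQ e.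
rewrite mxE; congr (_ + _); rewrite mxE mxE mul11 e2.
by rewrite expr2 mulrC.
Qed.

End Q.

Section Inv.
Variables n k : nat.
Variable U : 'M[R]_(n, k).
Hypothesis UG : U *m (U^T *m U) = U.
Variable l : 'I_n.
Let u := row l U.
Let S := dot u u.
Hypothesis S0 : S != 0.

Lemma uG : u *m (U^T *m U) = u.
Proof. by rewrite /u -row_mul UG. Qed.

Lemma Gtr : (U^T *m U)^T = U^T *m U.
Proof. by rewrite trmx_mul trmxK. Qed.

Lemma Gu : (U^T *m U) *m u^T = u^T.
Proof. by rewrite -Gtr -trmx_mul uG. Qed.

Let Q := Qm u.
Let c := S^-1.

Lemma QG : Q *m (U^T *m U) = U^T *m U - c *: (u^T *m u).
Proof. by rewrite /Q /Qm mulmxBl mul1mx -scalemxAl -mulmxA uG. Qed.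

Lemma GQ : (U^T *m U) *m Q = U^T *m U - c *: (u^T *m u).
Proof. by rewrite /Q /Qm mulmxBr mulmx1 -scalemxAr mulmxA Gu. Qed.

Lemma G'E : (U *m Q)^T *m (U *m Q) = U^T *m U - c *: (u^T *m u).
Proof.
rewrite trmx_mul Qm_tr // mulmxA -[Qm u *m U^T *m U]mulmxA QG mulmxBl GQ.
by rewrite -scalemxAl -mulmxA uQ // mulmx0 scaler0 subr0.
Qed.

Lemma inv1 : (U *m Q) *m ((U *m Q)^T *m (U *m Q)) = U *m Q.
Proof.
have e : Qm u *m (U^T *m U - c *: (u^T *m u)) = U^T *m U - c *: (u^T *m u).
  by rewrite mulmxBr QG -scalemxAr mulmxA Qu // mul0mx scaler0 subr0.
rewrite G'E -mulmxA e mulmxBr UG -scalemxAr.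
by rewrite /Qm [in RHS]mulmxBr mulmx1 -scalemxAr.
Qed.

Lemma inv2 : \tr ((U *m Q)^T *m (U *m Q)) = \tr (U^T *m U) - 1.
Proof.
rewrite G'E raddfB /= mxtraceZ [\tr (u^T *m u)]mxtrace_mulC uuT mxtrace_scalar /c mulVf //.
Qed.

Lemma rowU' : row l (U *m Q) = 0.
Proof. by rewrite row_mul uQ. Qed.

Lemma UuT_i i : (U *m u^T) i 0 = dot (row i U) u.
Proof. by rewrite /dot -row_mul [RHS]mxE. Qed.

Lemma UuT_l : (U *m u^T) l 0 = S.
Proof. by rewrite UuT_i. Qed.

Lemma sumUuT : \sum_i ((U *m u^T) i 0) ^+ 2 = S.
Proof.
have -> : \sum_i ((U *m u^T) i 0) ^+ 2 = ((U *m u^T)^T *m (U *m u^T)) 0 0.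
  by rewrite [RHS]mxE; apply: eq_bigr => i _; rewrite [(_^T) 0 i]mxE expr2.
by rewrite trmx_mul trmxK -mulmxA [U^T *m _]mulmxA Gu.
Qed.

End Inv.
End Mx.


Section Row.
Variable R : realType.
Variable p : R.
Hypothesis p0 : 0 < p.
Hypothesis p12 : p <= 2^-1.

Definition xrow n (r : {ffun 'I_n -> bool}) : 'rV[R]_n := \row_i xr R (r i).
Definition Yrow n k (U : 'M[R]_(n, k)) r := dot (xrow r *m U) (xrow r *m U).

Lemma xrow_flip n (l : 'I_n) r i : i != l -> xrow (flip l r) 0 i = xrow r 0 i.
Proof. by move=> il; rewrite !mxE ffunE (negbTE il). Qed.

Lemma mul_row_flip n k (U : 'M[R]_(n, k)) (l : 'I_n) r c :
  (xrow (flip l r) *m U) 0 c = (xrow r *m U) 0 c + (xr R (~~ r l) - xr R (r l)) * U l c.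
Proof.
rewrite !mxE (bigD1 l) //= [in RHS](bigD1 l) //= !mxE ffunE eqxx.
have -> : \sum_(i < n | i != l) xrow (flip l r) 0 i * U i c
        = \sum_(i < n | i != l) xrow r 0 i * U i c.
  by apply: eq_bigr => i il; rewrite xrow_flip.
ring.
Qed.

Lemma xr_diff b : (xr R (~~ b) - xr R b) ^+ 2 = 1.
Proof. by case: b; rewrite /xr /= ?subr0 ?sub0r ?sqrrN expr1n. Qed.


Lemma hp1 : 0 <= 1 - p <= 1.
Proof.
have h2 : (2^-1 : R) = 1/2 by rewrite div1r.
by move: p12; rewrite h2 => h; have := p0; move=> hp; apply/andP; split; lra.
Qed.

Lemma row_bound (K : nat) (d : R) (d0 : 0 < d)
  (hLO : forall n (v : 'I_n -> R), \sum_i v i ^+ 2 = 1 ->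
      (forall i, v i ^+ 2 <= 4 * d ^+ 2) ->
      \sum_r rw p r * (((Yv v r ^+ 2 <= d ^+ 2)%R : bool)%:R) <= (1 - p) ^+ K) :
  forall j, (j <= K)%N -> forall n k (U : 'M[R]_(n, k)), U *m (U^T *m U) = U ->
    \tr (U^T *m U) = j%:R ->
    \sum_r rw p r * (((Yrow U r <= d ^+ 2)%R : bool)%:R) <= (1 - p) ^+ j.
Proof.
have /andP[hq0 hq1] := hp1.
elim=> [|j IH] hj n k U UG trU.
  apply: le_trans (_ : _ <= \sum_r rw p r) _; last by rewrite rw_sum1 expr0.
  apply: ler_sum => r _.
  rewrite -[X in _ <= X]mulr1; apply: ler_wpM2l; first exact: rw_ge0.
  by rewrite lern1 leq_b1.
have d2 : 0 < 4 * d ^+ 2 by apply: mulr_gt0 => //; apply: exprn_gt0.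
have [/existsP [l hl]|hall] :=
  boolP [exists l : 'I_n, 4 * d ^+ 2 < dot (row l U) (row l U)].
- set u := row l U in hl *; set S := dot u u in hl *.
  have Spos : 0 < S by apply: lt_trans hl.
  have S0 : S != 0 by rewrite gt_eqF.
  set U' := U *m Qm u.
  have trU' : \tr (U'^T *m U') = j%:R by rewrite inv2 // trU -natr1 addrK.
  have IH' := IH (ltnW hj) n k U' (inv1 UG S0) trU'.
  pose a r := dot (xrow r *m U) u.
  have hY r : Yrow U' r = Yrow U r - (a r) ^+ 2 / S.
    by rewrite /Yrow /U' mulmxA dotQ.
  pose A r := ((a r) ^+ 2 <= S * d ^+ 2)%R.
  pose B r := (Yrow U' r <= d ^+ 2)%R.
  have U'l c : U' l c = 0.
    have := congr1 (fun M : 'rV_k => M 0 c) (rowU' S0).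
    by rewrite !mxE.
  have hB r : B (flip l r) = B r.
    have e : xrow (flip l r) *m U' = xrow r *m U'.
      by apply/rowP => c; rewrite mul_row_flip U'l mulr0 addr0.
    by rewrite /B /Yrow e.
  have uE c : u 0 c = U l c by rewrite mxE.
  have ha r : a (flip l r) = a r + (xr R (~~ r l) - xr R (r l)) * S.
    rewrite /a /S !dotE.
    transitivity (\sum_c ((xrow r *m U) 0 c * u 0 c
                     + (xr R (~~ r l) - xr R (r l)) * (u 0 c * u 0 c))).
      by apply: eq_bigr => c _; rewrite mul_row_flip -uE; ring.
    by rewrite big_split /= -mulr_sumr.
  have hA r : ~~ (A r && A (flip l r)).
    rewrite /A ha; apply/negP => /andP [h1 h2].
    have e2 := xr_diff (r l).
    move: h2 e2; set e := xr R (~~ r l) - xr R (r l) => h2 e2.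
    move: h1 h2; set x := a r => h1 h2.
    have hS : S ^+ 2 <= 4 * S * d ^+ 2.
      have -> : S ^+ 2 = ((x + e * S) - x) ^+ 2.
        by rewrite addrAC subrr add0r exprMn e2 mul1r.
      have := sqr_ge0 ((x + e * S) + x); nra.
    nra.
  have hle : \sum_r rw p r * (((Yrow U r <= d ^+ 2)%R : bool)%:R)
      <= \sum_r rw p r * ((A r && B r)%:R).
    apply: ler_sum => r _; apply: ler_wpM2l; first exact: rw_ge0.
    case hy : (Yrow U r <= d ^+ 2)%R => //=.
    have Y'0 : 0 <= Yrow U' r by apply: dot_ge0.
    have aS : 0 <= a r ^+ 2 / S by apply: divr_ge0; [apply: sqr_ge0|apply: ltW].
    have hAr : A r.
      rewrite /A -ler_pdivrMl // mulrC.
      move: (hY r) Y'0 hy => -> Y'0 hy; lra.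
    have hBr : B r by rewrite /B (hY r); lra.
    by rewrite hAr hBr.
  apply: le_trans hle _.
  apply: le_trans (peel p0 p12 hB hA) _.
  by rewrite exprS; apply: ler_wpM2l.
- have hall' l : dot (row l U) (row l U) <= 4 * d ^+ 2.
    rewrite leNgt; apply/negP => h; move/negP: hall; apply; apply/existsP; by exists l.
  have trE : \tr (U^T *m U) = \sum_l dot (row l U) (row l U).
    rewrite /mxtrace; under eq_bigr do rewrite mxE.
    rewrite exchange_big; apply: eq_bigr => l _; rewrite dotE.
    by apply: eq_bigr => c _; rewrite !mxE.
  have [l Spos] : exists l, 0 < dot (row l U) (row l U).
    case: (boolP [exists l, 0 < dot (row l U) (row l U)]) => [/existsP //|/negP hn].
    exfalso.
    have : \sum_l dot (row l U) (row l U) <= 0.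
      apply: sumr_le0 => l _; rewrite leNgt; apply/negP => h; apply: hn.
      by apply/existsP; exists l.
    by rewrite -trE trU => h; have := ltr0Sn R j; lra.
  set u := row l U in Spos; set S := dot u u in Spos.
  have S0 : S != 0 by rewrite gt_eqF.
  have sq : Num.sqrt S ^+ 2 = S by rewrite sqr_sqrtr // ltW.
  have sqpos : 0 < Num.sqrt S by rewrite sqrtr_gt0.
  pose v i := (U *m u^T) i 0 / Num.sqrt S.
  have vE i : v i ^+ 2 = (U *m u^T) i 0 ^+ 2 / S by rewrite /v exprMn exprVn sq.
  have hv : \sum_i v i ^+ 2 = 1.
    under eq_bigr do rewrite vE.
    by rewrite -mulr_suml sumUuT // mulfV.
  have hvi i : v i ^+ 2 <= 4 * d ^+ 2.
    rewrite vE UuT_i.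
    have := dotQ S0 (row i U); have := dot_ge0 (row i U *m Qm u).
    have := hall' i; lra.
  have aE r : dot (xrow r *m U) u = Yv v r * Num.sqrt S.
    rewrite /dot -mulmxA mxE /Yv mulr_suml; apply: eq_bigr => i _.
    by rewrite [(xrow r) 0 i]mxE /v -mulrA mulfVK // gt_eqF.
  apply: le_trans (_ : _ <= \sum_r rw p r * (((Yv v r ^+ 2 <= d ^+ 2)%R : bool)%:R)) _.
    apply: ler_sum => r _; apply: ler_wpM2l; first exact: rw_ge0.
    case hy : (Yrow U r <= d ^+ 2)%R => //=.
    have := dotQ S0 (xrow r *m U); have := dot_ge0 (xrow r *m U *m Qm u).
    rewrite aE exprMn sq mulfK // => h1 h2.
    have : (Yv v r ^+ 2 <= d ^+ 2)%R by move: hy; rewrite /Yrow; lra.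
    by move=> ->.
  apply: le_trans (hLO n v hv hvi) _.
  by apply: ler_wiXn2l.
Qed.

End Row.


Section Final.
Variable R : realType.

Lemma bernoulli (y : R) n : 0 <= y -> 1 + n%:R * y <= (1 + y) ^+ n.
Proof.
move=> y0; elim: n => [|n IH]; first by rewrite mul0r addr0 expr0.
rewrite exprS -natr1.
have h : 0 <= n%:R * y ^+ 2 by apply: mulr_ge0; [apply: ler0n|apply: sqr_ge0].
apply: le_trans (_ : (1 + y) * (1 + n%:R * y) <= _).
  by rewrite expr2 in h; nra.
by apply: ler_wpM2l => //; lra.
Qed.

Lemma pow_big (z T : R) : 1 < z -> exists L : nat, T <= z ^+ L.
Proof.
move=> z1.
have z0 : 0 < z - 1 by lra.
have hb := @archi_boundP _ (`|T| / (z - 1)) (divr_ge0 (normr_ge0 _) (ltW z0)).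
exists (Num.Def.archi_bound (`|T| / (z - 1))).
set L := Num.Def.archi_bound _ in hb *.
have := bernoulli L (ltW z0); rewrite [1 + (z - 1)]addrC subrK => hz.
have : `|T| < L%:R * (z - 1) by rewrite -ltr_pdivrMr.
have := ler_norm T; lra.
Qed.

Definition rowf m n (M : 'M[bool]_(m, n)) (i : 'I_m) : {ffun 'I_n -> bool} :=
  [ffun j => M i j].

Lemma mx_factor (p : R) m n (h : {ffun 'I_n -> bool} -> R) :
  \sum_(M : 'M[bool]_(m, n)) ber_weight p M * \prod_i h (rowf M i)
  = \prod_(i < m) \sum_r rw p r * h r.
Proof.
rewrite bigA_distr_bigA /=.
pose mx (F : {ffun 'I_m -> {ffun 'I_n -> bool}}) : 'M[bool]_(m, n) := \matrix_(i, j) F i j.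
pose fm (M : 'M[bool]_(m, n)) : {ffun 'I_m -> {ffun 'I_n -> bool}} := [ffun i => rowf M i].
have K1 : cancel mx fm.
  by move=> F; apply/ffunP => i; apply/ffunP => j; rewrite /fm /rowf !ffunE mxE.
have K2 : cancel fm mx.
  by move=> M; apply/matrixP => i j; rewrite /mx /fm /rowf mxE !ffunE.
rewrite (reindex mx); last by exists fm => x _.
apply: eq_bigr => F _.
have rF i : rowf (mx F) i = F i.
  by apply/ffunP => j; rewrite /rowf /mx ffunE mxE.
rewrite /ber_weight -big_split /=; apply: eq_bigr => i _.
rewrite rF /rw; congr (_ * _); apply: eq_bigr => j _.
by rewrite /om /mx mxE.
Qed.


Lemma entry_eq m n k (M : 'M[bool]_(m, n)) (V : 'M[R]_(n, k)) i c :
  (real_of_bmx R M *m V) i c = (xrow R (rowf M i) *m V) 0 c.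
Proof. by rewrite !mxE; apply: eq_bigr => j _; rewrite !mxE /rowf ffunE. Qed.

Lemma hsE m n k (M : 'M[bool]_(m, n)) (V : 'M[R]_(n, k)) :
  hs_norm (real_of_bmx R M *m V) = Num.sqrt (\sum_i Yrow V (rowf M i)).
Proof.
rewrite /hs_norm; congr Num.sqrt; apply: eq_bigr => i _.
by rewrite /Yrow dotE; apply: eq_bigr => c _; rewrite expr2 !entry_eq.
Qed.

Lemma key (b d c : R) m n k (M : 'M[bool]_(m, n)) (V : 'M[R]_(n, k)) (L : nat) :
  0 < b -> b <= 1 -> 0 < d -> 0 <= c -> (0 < L)%N ->
  c ^+ 2 * n%:R * L%:R <= d ^+ 2 * m%:R ->
  hs_norm (real_of_bmx R M *m V) <= c * Num.sqrt n%:R ->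
  b ^+ (m %/ L) <= \prod_i (if (Yrow V (rowf M i) <= d ^+ 2)%R then 1 else b).
Proof.
move=> b0 b1 d0 c0 L0 hc hE.
rewrite hsE in hE.
have Y0 i : 0 <= Yrow V (rowf M i) by apply: dot_ge0.
have cn0 : 0 <= c ^+ 2 * n%:R by apply: mulr_ge0; [apply: sqr_ge0|apply: ler0n].
have hc' : c * Num.sqrt n%:R = Num.sqrt (c ^+ 2 * n%:R).
  by rewrite sqrtrM ?sqr_ge0 // sqrtr_sqr ger0_norm.
rewrite hc' ler_sqrt // in hE.
set bad := [set i | ~~ (Yrow V (rowf M i) <= d ^+ 2)%R].
have hbad : #|bad|%:R * d ^+ 2 <= c ^+ 2 * n%:R.
  apply: le_trans hE.
  rewrite (bigID (mem bad)) /=.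
  have h1 : \sum_(i in bad) d ^+ 2 <= \sum_(i in bad) Yrow V (rowf M i).
    apply: ler_sum => i; rewrite inE -ltNge => h; exact: ltW.
  have h2 : 0 <= \sum_(i | i \notin bad) Yrow V (rowf M i) by apply: sumr_ge0.
  move: h1; rewrite sumr_const -mulr_natl => h1.
  lra.
have hLm : (#|bad| * L <= m)%N.
  rewrite -(ler_nat R) natrM.
  have d2 : 0 < d ^+ 2 by apply: exprn_gt0.
  have L0' : (0 : R) <= L%:R by apply: ler0n.
  have : #|bad|%:R * d ^+ 2 * L%:R <= d ^+ 2 * m%:R.
    apply: le_trans hc; apply: ler_wpM2r => //.
  move=> h; rewrite -(ler_pM2l d2); lra.
have hq : (#|bad| <= m %/ L)%N by rewrite leq_divRL.
have -> : \prod_i (if (Yrow V (rowf M i) <= d ^+ 2)%R then 1 else b) = b ^+ #|bad|.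
  rewrite (bigID (mem bad)) /= [X in _ * X]big1 ?mulr1; last first.
    by move=> i; rewrite inE negbK => ->.
  rewrite -prodr_const; apply: eq_bigr => i; rewrite inE => /negbTE ->.
  done.
by apply: ler_wiXn2l => //; apply: ltW.
Qed.

End Final.

Lemma natfacts (k L q0 n : nat) : (2 * k + L * q0 <= n)%N ->
  [/\ (k <= n)%N, (n <= 2 * (n - k))%N & (q0 * L <= n - k)%N].
Proof. move=> h; split; lia. Qed.

Unset Implicit Arguments. Set Strict Implicit. Set Printing Implicit Defensive.

Theorem lemma2p7 (R : realType) (p : R) (k : nat) (eps : R) :
  0 < p -> p <= 2^-1 -> (1 <= k)%N -> 0 < eps ->
  exists c : R, 0 < c /\
  exists n0 : nat, forall (n : nat) (V : 'M[R]_(n, k)),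
    (n0 <= n)%N ->
    V^T *m V = 1%:M ->
    ber_prob p (fun M : 'M[bool]_(n - k, n) =>
                  hs_norm (real_of_bmx R M *m V) <= c * Num.sqrt (n%:R))
      <= (1 - p + eps) ^+ (k * n).
Proof.
move=> p0 p12 k1 e0.
have /andP[hq0 hq1] := hp1 p0 p12.
have h2 : (2^-1 : R) = 1/2 by rewrite div1r.
have pq : 0 < 1 - p by move: p12; rewrite h2 => ?; lra.
set Aq := (1 - p) ^+ k.
have Aq0 : 0 < Aq by apply: exprn_gt0.
have [d [d0 hLO]] := LO p0 p12 Aq0.
set B := (1 - p + eps) ^+ k.
have AB : Aq < B by rewrite /Aq /B ltrXn2r ?(ltW pq) -?lt0n //; lra.
have B0 : 0 < B by apply: lt_trans AB.
set b := Num.min ((B - Aq) / 2) (1 / 2).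
have b0 : 0 < b by rewrite /b lt_min; apply/andP; split; lra.
have b12 : b <= 1 / 2 by rewrite /b ge_min lexx orbT.
have bB : b <= (B - Aq) / 2 by rewrite /b ge_min lexx.
set rho := Aq + b.
have rB : rho < B by rewrite /rho; lra.
have rho0 : 0 < rho by rewrite /rho; lra.
set g := rho / B.
have g0 : 0 < g by apply: divr_gt0.
have g1 : g < 1 by rewrite /g ltr_pdivrMr // mul1r.
have [L0 hL0] : exists L : nat, 2 / b <= (g^-1) ^+ L.
  by apply: pow_big; rewrite invf_gt1.
set L := L0.+1.
have gL : g ^+ L <= b / 2.
  have gL0 : 0 < g ^+ L0 by apply: exprn_gt0.
  have h : 2 / b * g ^+ L0 <= 1.
    by have := ler_wpM2r (ltW gL0) hL0; rewrite exprVn mulVf // gt_eqF.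
  apply: le_trans (_ : g ^+ L <= g ^+ L0) _.
    by rewrite /L exprS ler_piMl //; [apply: ltW|apply: ltW].
  have -> : g ^+ L0 = b / 2 * (2 / b * g ^+ L0) by field; rewrite gt_eqF.
  rewrite -[X in _ <= X]mulr1; apply: ler_wpM2l => //; lra.
have [q0 hq0'] : exists q0 : nat, (B ^+ k)^-1 <= 2 ^+ q0.
  by apply: pow_big; lra.
have Bk0 : 0 < B ^+ k by apply: exprn_gt0.
set c := d / (2 * L%:R).
have L0' : (0 : R) < L%:R by rewrite ltr0n.
exists c; split; first by apply: divr_gt0 => //; lra.
exists (2 * k + L * q0)%N.
move=> n V hn VV.
set m := (n - k)%N.
have [hkn n2m hqL] := natfacts hn.
have nm : n = (m + k)%N by rewrite subnK.
set q := (m %/ L)%N.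
have qq0 : (q0 <= q)%N by rewrite /q leq_divRL.
have UG : V *m (V^T *m V) = V by rewrite VV mulmx1.
have trV : \tr (V^T *m V) = k%:R by rewrite VV mxtrace1.
have hrow := row_bound p0 p12 d0 hLO (leqnn k) UG trV.
pose gf (r : {ffun 'I_n -> bool}) : R := if (Yrow V r <= d ^+ 2)%R then 1 else b.
have gf0 r : 0 <= gf r by rewrite /gf; case: ifP => _; lra.
have hrowg : \sum_r rw p r * gf r <= rho.
  apply: le_trans (_ : _ <= \sum_r (rw p r * (((Yrow V r <= d ^+ 2)%R : bool)%:R)
                                    + b * rw p r)) _.
    apply: ler_sum => r _; rewrite /gf.
    have := mulr_ge0 (ltW b0) (rw_ge0 p0 p12 r).
    by case: ifP => _ /=; rewrite ?mulr1 ?mulr0; lra.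
  by rewrite big_split /= -mulr_sumr rw_sum1 mulr1 /rho lerD2r.
have bw0 (M : 'M[bool]_(m, n)) : 0 <= ber_weight p M.
  by apply: prodr_ge0 => i _; apply: prodr_ge0 => j _; case: (M i j); lra.
have hcn : c ^+ 2 * n%:R * L%:R <= d ^+ 2 * m%:R.
  have e : c ^+ 2 * n%:R * L%:R = d ^+ 2 * n%:R / (4 * L%:R).
    by rewrite /c; field; rewrite gt_eqF.
  rewrite e ler_pdivrMr; last lra.
  have hn' : (n%:R : R) <= 2 * m%:R by rewrite -natrM ler_nat.
  have L1 : (1 : R) <= L%:R by rewrite ler1n.
  have m0 : (0 : R) <= m%:R by apply: ler0n.
  have d2 : 0 < d ^+ 2 by apply: exprn_gt0.
  have h1 : d ^+ 2 * n%:R <= d ^+ 2 * (2 * m%:R) by apply: ler_wpM2l => //; apply: ltW.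
  have h3 : (2 : R) * m%:R <= m%:R * (4 * L%:R).
    have h5 : (0 : R) <= 4 * L%:R - 2 by lra.
    have := mulr_ge0 m0 h5.
    rewrite mulrBr; lra.
  have h4 := ler_wpM2l (ltW d2) h3.
  rewrite -mulrA; lra.
have hsum : ber_prob p (fun M : 'M[bool]_(n - k, n) =>
                  hs_norm (real_of_bmx R M *m V) <= c * Num.sqrt (n%:R)) * b ^+ q
    <= \sum_(M : 'M[bool]_(m, n)) ber_weight p M * \prod_i gf (rowf M i).
  rewrite /ber_prob mulr_suml.
  apply: le_trans (_ : \sum_(M : 'M[bool]_(m, n) |
                  hs_norm (real_of_bmx R M *m V) <= c * Num.sqrt (n%:R))
                  ber_weight p M * \prod_i gf (rowf M i) <= _).
    apply: ler_sum => M hM; apply: ler_wpM2l => //.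
    apply: (key (c := c) (L := L)) => //; first lra.
    by apply: ltW; apply: divr_gt0 => //; lra.
  rewrite [X in _ <= X](bigID (fun M : 'M[bool]_(m, n) =>
                  hs_norm (real_of_bmx R M *m V) <= c * Num.sqrt (n%:R))) /= lerDl.
  by apply: sumr_ge0 => M _; apply: mulr_ge0 => //; apply: prodr_ge0.
rewrite mx_factor in hsum.
have hprod : \prod_(i < m) \sum_r rw p r * gf r <= rho ^+ m.
  have -> : rho ^+ m = \prod_(i < m) rho by rewrite prodr_const card_ord.
  apply: ler_prod => i _; apply/andP; split => //.
  by apply: sumr_ge0 => r _; apply: mulr_ge0 => //; apply: rw_ge0.
have hP := le_trans hsum hprod.
move: hP; set P := ber_prob p _ => hP.
have bq0 : 0 < b ^+ q by apply: exprn_gt0.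
have Bm0 : 0 <= B ^+ m by apply: exprn_ge0; apply: ltW.
have rhoE : rho = g * B by rewrite /g divfK // gt_eqF.
have hg : g ^+ m <= (b / 2) ^+ q.
  apply: le_trans (_ : g ^+ m <= g ^+ (L * q)) _.
    by apply: ler_wiXn2l; [apply: ltW|apply: ltW|rewrite mulnC /q leq_trunc_div].
  rewrite exprM; apply: (lerXn2r q) => //; rewrite nnegrE.
    by apply: exprn_ge0; apply: ltW.
  by apply: divr_ge0 => //; apply: ltW.
have hP2 : P * b ^+ q <= b ^+ q * ((2^-1) ^+ q * B ^+ m).
  apply: le_trans hP _; rewrite rhoE exprMn.
  apply: le_trans (ler_wpM2r Bm0 hg) _.
  idtac.
  by rewrite exprMn mulrA.
rewrite mulrC ler_pM2l // in hP2.
have h2q : (2^-1) ^+ q <= B ^+ k.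
  apply: le_trans (_ : (2^-1) ^+ q <= (2^-1) ^+ q0) _.
    by apply: ler_wiXn2l => //; rewrite h2; lra.
  have i0 : 0 < (B ^+ k)^-1 by rewrite invr_gt0.
  have t0 : (0 : R) < 2 ^+ q0 by apply: exprn_gt0; lra.
  by rewrite exprVn -[B ^+ k]invrK lef_pV2 ?posrE.
have -> : (1 - p + eps) ^+ (k * n) = B ^+ k * B ^+ m.
  by rewrite exprM /B -exprD addnC -nm.
apply: le_trans hP2 _.
by apply: ler_wpM2r.
Qed.
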